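(* Let $n\ge 2$ be an integer. Let $f(z)=\sum_{j\ge 1} b_j z^j$ be analytic in the unit disc $\mathbb{D}$ with $b_j\ge 0$ for all $j\ge 1$ and $\|f\|_{\mathcal{B}}\le 1$, and suppose $f$ is extremal for the restricted problem $$\sup\Big\{ \mathcal{F}_n(g)=\sum_{k=1}^n k|c_k|^2 \,:\, \|g\|_{\mathcal{B}}\le 1,\ g(z)=\sum_{k=1}^\infty c_k z^k,\ c_j\ge 0 \text{ for all } j\ge 1\Big\},$$ i.e. $f$ attains this supremum. If $1\le k<m\le n$ and $b_k>0$, then $$ b_m\le \frac{m-k}{2m}\, b_k. $$
   Context: $\mathbb{D}$ is the open unit disc in $\mathbb{C}$. The Bloch space $\mathcal{B}$ consists of analytic functions $f$ on $\mathbb{D}$ with finite norm $\|f\|_{\mathcal{B}}=|f(0)|+\sup_{z\in\mathbb{D}}(1-|z|^2)|f'(z)|$. *)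

(* Defs.v *)
From Stdlib Require Import Reals.
From Coquelicot Require Import Coquelicot.
Open Scope R_scope.

Definition in_disc (z : C) : Prop := Cmod z < 1.

Definition has_taylor (c : nat -> R) (g : C -> C) : Prop :=
  forall z : C, in_disc z ->
    is_series (fun k : nat => Cmult (RtoC (c k)) (pow_n z k)) (g z).

Definition bloch_norm (g : C -> C) : Rbar :=
  Rbar_plus (Finite (Cmod (g 0)))
    (Lub_Rbar (fun r : R => exists (z l : C),
        in_disc z /\ is_derive (K := C_AbsRing) (V := C_NormedModule) g z l
        /\ r = (1 - Cmod z ^ 2) * Cmod l)).

Definition bloch_admissible (c : nat -> R) (g : C -> C) : Prop :=
  c 0%nat = 0 /\ (forall j : nat, (1 <= j)%nat -> 0 <= c j) /\
  has_taylor c g /\ Rbar_le (bloch_norm g) (Finite 1).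

Definition taylor_Fn (n : nat) (c : nat -> R) : R :=
  sum_n_m (fun k : nat => INR k * (Rabs (c k)) ^ 2) 1 n.

(* Main.v *)
Require Import Defs.
From Stdlib Require Import Reals Lra Lia Psatz.
From Coquelicot Require Import Coquelicot.
Open Scope R_scope.

Lemma Re_series (u : nat -> C) (l : C) :
  is_series (K:=C_AbsRing) (V:=C_NormedModule) u l ->
  is_series (K:=R_AbsRing) (V:=R_NormedModule) (fun j => Re (u j)) (Re l).
Proof.
  unfold is_series. intros H.
  assert (E : forall N, sum_n (fun j => Re (u j)) N = Re (sum_n u N)).
  { induction N. rewrite !sum_O. reflexivity.
    rewrite !sum_Sn, IHN. reflexivity. }
  apply (filterlim_ext (fun N => Re (sum_n u N))). intros; now rewrite E.
  eapply filterlim_comp. exact H.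
  apply filterlim_locally. intros eps. exists eps. intros y [H1 H2]. exact H1.
Qed.

Lemma norm_series_le (u : nat -> C) (l : C) (v : nat -> R) (s : R) :
  is_series (K:=C_AbsRing) (V:=C_NormedModule) u l ->
  is_series (K:=R_AbsRing) (V:=R_NormedModule) v s ->
  (forall j, Cmod (u j) <= v j) -> Cmod l <= s.
Proof.
  intros Hu Hv Hle.
  assert (H1 : is_lim_seq (fun N => norm (sum_n u N)) (norm l)).
  { eapply filterlim_comp. exact Hu. apply filterlim_norm. }
  assert (H2 : forall N, norm (sum_n u N) <= sum_n v N).
  { intros N. unfold sum_n. eapply Rle_trans. apply (norm_sum_n_m u).
    apply sum_n_m_le. intros. apply Hle. }
  assert (Hv2 : is_lim_seq (sum_n v) s) by exact Hv.
  pose proof (is_lim_seq_le _ _ _ _ H2 H1 Hv2). simpl in H. exact H.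
Qed.

Lemma series_delta {K : AbsRing} {V : NormedModule K} (k : nat) (x : V) :
  is_series (fun j => if Nat.eqb j k then x else zero) x.
Proof.
  assert (E : forall N, sum_n (fun j => if Nat.eqb j k then x else zero) N =
                        if Nat.leb k N then x else zero).
  { induction N.
    - rewrite sum_O. destruct k; reflexivity.
    - rewrite sum_Sn, IHN.
      destruct (Nat.leb k N) eqn:E1; destruct (Nat.eqb (S N) k) eqn:E2;
        destruct (Nat.leb k (S N)) eqn:E3;
        apply Nat.leb_le in E1 || apply Nat.leb_gt in E1;
        apply Nat.eqb_eq in E2 || apply Nat.eqb_neq in E2;
        apply Nat.leb_le in E3 || apply Nat.leb_gt in E3; try lia;
        rewrite ?plus_zero_r, ?plus_zero_l; reflexivity. }
  unfold is_series.
  apply (filterlim_ext_loc (fun _ => x)).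
  exists k. intros N HN. rewrite E. apply Nat.leb_le in HN. now rewrite HN.
  apply filterlim_const.
Qed.

Definition Ej (z h : C) (j : nat) : C :=
  (Cpow (z + h) j - Cpow z j - RtoC (INR j) * Cpow z (pred j) * h)%C.

Lemma Ej_S z h j : Ej z h (S j) = ((z + h) * Ej z h j + RtoC (INR j) * Cpow z (pred j) * (h * h))%C.
Proof.
  unfold Ej. destruct j.
  - simpl. ring.
  - change (pred (S (S j))) with (S j). change (pred (S j)) with j.
    rewrite (S_INR (S j)), RtoC_plus. simpl Cpow. ring.
Qed.

Lemma Ej_bound (z h : C) (rho : R) (j : nat) : Cmod z + Cmod h <= rho ->
  rho ^ 2 * Cmod (Ej z h j) <= Cmod h ^ 2 * INR j ^ 2 * rho ^ j.
Proof.
  intros Hr.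
  assert (Hz := Cmod_ge_0 z). assert (Hh := Cmod_ge_0 h).
  assert (Hzh : Cmod (z + h) <= rho) by (eapply Rle_trans; [apply Cmod_triangle|lra]).
  induction j.
  - unfold Ej. simpl. replace (1 - 1 - RtoC 0 * 1 * h)%C with (RtoC 0) by ring.
    rewrite Cmod_0. lra.
  - rewrite Ej_S.
    assert (Hn : Cmod ((z + h) * Ej z h j + RtoC (INR j) * Cpow z (pred j) * (h * h))%C
                 <= Cmod (z + h) * Cmod (Ej z h j) + INR j * Cmod z ^ pred j * Cmod h ^ 2).
    { eapply Rle_trans. apply Cmod_triangle.
      rewrite !Cmod_mult, Cmod_R, Cmod_pow, Rabs_pos_eq by apply pos_INR.
      simpl. lra. }
    assert (HE := Cmod_ge_0 (Ej z h j)).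
    assert (Hj := pos_INR j).
    assert (Hrho : 0 <= rho) by lra.
    assert (Hp : INR j * (rho ^ 2 * Cmod z ^ pred j) <= INR j * rho ^ S j).
    { destruct j. simpl. lra.
      apply Rmult_le_compat_l. lra.
      simpl pred. replace (rho ^ S (S j)) with (rho ^ 2 * rho ^ j) by (simpl; ring).
      apply Rmult_le_compat_l. nra. apply pow_incr. lra. }
    rewrite S_INR.
    assert (Hrj := pow_le rho j Hrho).
    assert (Hzp := pow_le (Cmod z) (pred j) Hz).
    replace (rho ^ S j) with (rho * rho ^ j) by reflexivity.
    replace (rho ^ S j) with (rho * rho ^ j) in Hp by reflexivity.
    assert (H1 : rho ^ 2 * Cmod (Ej z h (S j)) <=
           Cmod (z + h) * (rho ^ 2 * Cmod (Ej z h j)) + Cmod h ^ 2 * (INR j * (rho ^ 2 * Cmod z ^ pred j))).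
    { rewrite Ej_S. assert (0 <= rho ^ 2) by nra. nra. }
    assert (H2 : Cmod (z + h) * (rho ^ 2 * Cmod (Ej z h j)) <= rho * (Cmod h ^ 2 * INR j ^ 2 * rho ^ j)).
    { apply Rmult_le_compat; try nra. apply Cmod_ge_0. }
    assert (H3 : Cmod h ^ 2 * (INR j * (rho ^ 2 * Cmod z ^ pred j)) <= Cmod h ^ 2 * (INR j * (rho * rho ^ j))).
    { apply Rmult_le_compat_l. nra. exact Hp. }
    assert (0 <= Cmod h ^ 2 * rho * rho ^ j) by (apply Rmult_le_pos; [nra|auto]).
    nra.
Qed.

Lemma lim0_bounded (u : nat -> R) : is_lim_seq u 0 -> exists M, forall n, Rabs (u n) <= M.
Proof.
  intros H. apply is_lim_seq_spec in H.
  destruct (H (mkposreal 1 Rlt_0_1)) as [N HN]. simpl in HN.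
  assert (Hs : forall K, 0 <= sum_f_R0 (fun i => Rabs (u i)) K /\
                 forall n, (n <= K)%nat -> Rabs (u n) <= sum_f_R0 (fun i => Rabs (u i)) K).
  { induction K.
    - simpl. split. apply Rabs_pos. intros n Hn. replace n with 0%nat by lia. lra.
    - destruct IHK as [H0 H1]. simpl. assert (Hp := Rabs_pos (u (S K))). split. lra.
      intros n Hn. destruct (Nat.eq_dec n (S K)). subst. lra.
      assert (Rabs (u n) <= sum_f_R0 (fun i => Rabs (u i)) K) by (apply H1; lia). lra. }
  exists (1 + sum_f_R0 (fun i => Rabs (u i)) N).
  intros n. destruct (Compare_dec.le_lt_dec n N).
  - destruct (Hs N) as [H0 H1]. specialize (H1 n l). lra.
  - destruct (Hs N) as [H0 H1]. assert (Hn := HN n ltac:(lia)).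
    rewrite Rminus_0_r in Hn. lra.
Qed.

Lemma radius_ge (a : nat -> R) (g : C -> C) : has_taylor a g ->
  forall x, 0 <= x < 1 -> Rbar_lt (Finite x) (CV_radius a).
Proof.
  intros H x Hx.
  set (y := (x + 1) / 2).
  assert (Hy : in_disc (RtoC y)).
  { unfold in_disc. rewrite Cmod_R, Rabs_pos_eq; unfold y; lra. }
  specialize (H _ Hy). apply Re_series in H.
  assert (Hs : is_series (fun k => a k * y ^ k) (Re (g (RtoC y)))).
  { eapply is_series_ext; [|exact H]. intros k. simpl.
    change (pow_n (RtoC y) k) with (Cpow (RtoC y) k). rewrite <- RtoC_pow. simpl. ring. }
  assert (Hl : is_lim_seq (fun k => a k * y ^ k) 0).
  { apply ex_series_lim_0. eexists. exact Hs. }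
  destruct (lim0_bounded _ Hl) as [M HM].
  destruct (CV_radius_bounded a) as [Hub _].
  assert (Hle : Rbar_le (Finite y) (CV_radius a)).
  { apply Hub. exists M. exact HM. }
  eapply Rbar_lt_le_trans; [|exact Hle]. simpl. unfold y. lra.
Qed.

Lemma c2_radius (a : nat -> R) : CV_radius (fun j => INR j ^ 2 * a j) = CV_radius a.
Proof.
  rewrite (CV_radius_ext _ (PS_incr_1 (PS_derive (PS_incr_1 (PS_derive a))))).
  rewrite CV_radius_incr_1, CV_radius_derive, CV_radius_incr_1, CV_radius_derive. reflexivity.
  intros [|n]. simpl. unfold zero; simpl. ring.
  unfold PS_incr_1, PS_derive. simpl. ring.
Qed.

Lemma c2_abs (a : nat -> R) (g : C -> C) : has_taylor a g ->
  forall rho, 0 <= rho < 1 -> ex_series (fun j => Rabs (INR j ^ 2 * a j * rho ^ j)).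
Proof.
  intros H rho Hr.
  apply (CV_disk_inside (fun j => INR j ^ 2 * a j)).
  rewrite c2_radius, Rabs_pos_eq by lra. eapply radius_ge; eauto.
Qed.

Lemma d_bound (a : nat -> R) (z : C) (rho : R) (j : nat) : 0 < rho -> Cmod z <= rho ->
  rho * (Rabs (INR j * a j) * Cmod z ^ pred j) <= Rabs (INR j ^ 2 * a j * rho ^ j).
Proof.
  intros Hr Hz. assert (Hz0 := Cmod_ge_0 z).
  destruct j.
  - simpl. rewrite Rmult_0_l, Rabs_R0. rewrite Rmult_0_l, Rmult_0_r. apply Rabs_pos.
  - rewrite !Rabs_mult, (Rabs_pos_eq (INR (S j))) by apply pos_INR.
    rewrite (Rabs_pos_eq (rho ^ S j)) by (apply pow_le; lra).
    rewrite (Rabs_pos_eq (INR (S j) ^ 2)) by (apply pow_le; apply pos_INR).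
    simpl pred. change (rho ^ S j) with (rho * rho ^ j).
    assert (H1 : 1 <= INR (S j)) by (rewrite S_INR; assert (H := pos_INR j); lra).
    set (N := INR (S j)) in *. replace (N ^ 2) with (N * N) by ring.
    assert (H2 : Cmod z ^ j <= rho ^ j) by (apply pow_incr; lra).
    assert (H3 := Rabs_pos (a (S j))).
    assert (H4 := pow_le _ j Hz0).
    assert (H5 : Rabs (a (S j)) * Cmod z ^ j <= Rabs (a (S j)) * rho ^ j) by (apply Rmult_le_compat_l; lra).
    assert (H6 : 0 <= Rabs (a (S j)) * Cmod z ^ j) by (apply Rmult_le_pos; lra).
    assert (H7 : N * (Rabs (a (S j)) * Cmod z ^ j) <= N * (N * (Rabs (a (S j)) * rho ^ j))).
    { apply Rmult_le_compat_l. lra. assert (0 <= Rabs (a (S j)) * rho ^ j) by lra. nra. }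
    assert (H8 := Rmult_le_compat_l rho _ _ ltac:(lra) H7).
    replace (N * N * Rabs (a (S j)) * (rho * rho ^ j)) with (rho * (N * (N * (Rabs (a (S j)) * rho ^ j)))) by ring.
    replace (rho * (N * Rabs (a (S j)) * Cmod z ^ j)) with (rho * (N * (Rabs (a (S j)) * Cmod z ^ j))) by ring.
    exact H8.
Qed.

Lemma ps_deriv (a : nat -> R) (g : C -> C) : has_taylor a g ->
  forall z, in_disc z -> exists D,
    is_series (K:=C_AbsRing) (V:=C_NormedModule) (fun j => (RtoC (INR j * a j) * Cpow z (pred j))%C) D /\
    is_derive (K:=C_AbsRing) (V:=C_NormedModule) g z D.
Proof.
  intros H z Hz. unfold in_disc in Hz.
  assert (Hz0 := Cmod_ge_0 z).
  set (rho := (1 + Cmod z) / 2).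
  assert (Hr0 : 0 < rho) by (unfold rho; lra).
  assert (Hr1 : rho < 1) by (unfold rho; lra).
  assert (Hzr : Cmod z < rho) by (unfold rho; lra).
  assert (Hc2 := c2_abs a g H rho ltac:(lra)).
  set (c := fun j => Rabs (INR j ^ 2 * a j * rho ^ j)) in *.
  set (K := Series c).
  assert (HK : is_series c K) by (apply Series_correct; exact Hc2).
  set (K1 := Rabs K).
  assert (HK0 : 0 <= K1) by apply Rabs_pos.
  assert (HKK : K <= K1) by apply Rle_abs.
  assert (Hex : ex_series (K:=C_AbsRing) (V:=C_NormedModule) (fun j => (RtoC (INR j * a j) * Cpow z (pred j))%C)).
  { apply (@ex_series_le C_AbsRing C_CompleteNormedModule _ (fun j => scal (/ rho) (c j))).
    - intros j. change (norm _) with (Cmod (RtoC (INR j * a j) * Cpow z (pred j))%C).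
      rewrite Cmod_mult, Cmod_R, Cmod_pow. change (scal (/rho) (c j)) with (/ rho * c j).
      assert (Hd := d_bound a z rho j Hr0 ltac:(lra)). unfold c.
      apply (Rmult_le_reg_l rho). lra. replace (rho * (/ rho * Rabs (INR j ^ 2 * a j * rho ^ j))) with (Rabs (INR j ^ 2 * a j * rho ^ j)) by (field; lra). exact Hd.
    - apply (ex_series_scal_l (K:=R_AbsRing) (V:=R_NormedModule)). exact Hc2. }
  destruct Hex as [D HD]. exists D. split. exact HD.
  unfold is_derive, filterdiff. split. apply is_linear_scal_l.
  intros x Hx.
  apply (is_filter_lim_locally_unique (K:=C_AbsRing) (V:=AbsRing_NormedModule C_AbsRing)) in Hx. subst x.
  intros eps. unfold locally.
  assert (Hd0 : 0 < Rmin (rho - Cmod z) (eps * rho ^ 2 / (K1 + 1))).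
  { apply Rmin_pos. lra. apply Rdiv_lt_0_compat. apply Rmult_lt_0_compat. apply cond_pos. nra. lra. }
  exists (mkposreal _ Hd0). intros y Hy. unfold ball in Hy. simpl in Hy. unfold AbsRing_ball in Hy.
  change (Cmod (y - z) < Rmin (rho - Cmod z) (eps * rho ^ 2 / (K1 + 1))) in Hy.
  change (Cmod (g y - g z - (y - z) * D)%C <= eps * Cmod (y - z)).
  set (h := (y - z)%C) in *.
  assert (Hy' : y = (z + h)%C :> C) by (unfold h; change C in y; ring).
  assert (Hh0 := Cmod_ge_0 h).
  assert (Hh1 : Cmod h <= rho - Cmod z) by (eapply Rle_trans; [left; exact Hy| apply Rmin_l]).
  assert (Hh2 : Cmod h <= eps * rho ^ 2 / (K1 + 1)) by (eapply Rle_trans; [left; exact Hy| apply Rmin_r]).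
  assert (Hyin : in_disc y) by (unfold in_disc; rewrite Hy'; eapply Rle_lt_trans; [apply Cmod_triangle| lra]).
  assert (Hser : is_series (K:=C_AbsRing) (V:=C_NormedModule)
             (fun j => (RtoC (a j) * Ej z h j)%C) (g y - g z - h * D)%C).
  { assert (S1 := H y Hyin). assert (S2 := H z ltac:(unfold in_disc; lra)).
    assert (S3 := is_series_scal_l (K:=C_AbsRing) (V:=C_NormedModule) h _ _ HD).
    assert (S4 := is_series_minus _ _ _ _ S1 S2).
    assert (S5 := is_series_minus _ _ _ _ S4 S3).
    eapply is_series_ext; [|exact S5].
    intros j.
    assert (E : (RtoC (a j) * Ej z h j)%C = (RtoC (a j) * Cpow y j - RtoC (a j) * Cpow z j - h * (RtoC (INR j * a j) * Cpow z (pred j)))%C).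
    { unfold Ej. rewrite Hy', RtoC_mult. ring. }
    symmetry. exact E. }
  assert (Hv : is_series (fun j => (Cmod h ^ 2 / rho ^ 2) * c j) ((Cmod h ^ 2 / rho ^ 2) * K)).
  { apply (is_series_scal_l (K:=R_AbsRing) (V:=R_NormedModule)). exact HK. }
  assert (Hb := norm_series_le _ _ _ _ Hser Hv).
  eapply Rle_trans. apply Hb.
  - intros j. rewrite Cmod_mult, Cmod_R. unfold c.
    assert (HE := Ej_bound z h rho j ltac:(lra)).
    rewrite !Rabs_mult, (Rabs_pos_eq (INR j ^ 2)) by (apply pow_le, pos_INR).
    rewrite (Rabs_pos_eq (rho ^ j)) by (apply pow_le; lra).
    assert (Hrr : 0 < rho ^ 2) by nra.
    assert (HA := Rabs_pos (a j)).
    apply (Rmult_le_reg_l (rho ^ 2)). exact Hrr.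
    replace (rho ^ 2 * (Cmod h ^ 2 / rho ^ 2 * (INR j ^ 2 * Rabs (a j) * rho ^ j)))
      with (Rabs (a j) * (Cmod h ^ 2 * INR j ^ 2 * rho ^ j)) by (field; lra).
    replace (rho ^ 2 * (Rabs (a j) * Cmod (Ej z h j))) with (Rabs (a j) * (rho ^ 2 * Cmod (Ej z h j))) by ring.
    apply Rmult_le_compat_l; assumption.
  - assert (Hrr : 0 < rho ^ 2) by nra.
    assert (Hep := cond_pos eps).
    apply Rle_trans with (Cmod h ^ 2 / rho ^ 2 * K1).
    { apply Rmult_le_compat_l. apply Rmult_le_pos. nra. apply Rlt_le, Rinv_0_lt_compat. exact Hrr. exact HKK. }
    clear HKK HK Hv Hb. clearbody K1. clear K. rename K1 into K.
    apply (Rmult_le_reg_l (rho ^ 2 * (K + 1))). nra.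
    replace (rho ^ 2 * (K + 1) * (Cmod h ^ 2 / rho ^ 2 * K)) with (Cmod h * (Cmod h * (K + 1)) * K) by (field; lra).
    assert (Hh3 : Cmod h * (K + 1) <= eps * rho ^ 2).
    { apply (Rmult_le_reg_r (/ (K + 1))). apply Rinv_0_lt_compat; lra.
      rewrite Rmult_assoc, Rinv_r, Rmult_1_r by lra. exact Hh2. }
    assert (Cmod h * (Cmod h * (K + 1)) <= Cmod h * (eps * rho ^ 2)) by (apply Rmult_le_compat_l; lra).
    assert (Cmod h * (Cmod h * (K + 1)) * K <= Cmod h * (eps * rho ^ 2) * K) by (apply Rmult_le_compat_r; lra).
    assert (0 <= Cmod h * (eps * rho ^ 2)) by (apply Rmult_le_pos; nra).
    nra.
Qed.

Lemma series_unique_C (u : nat -> C) (l1 l2 : C) :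
  is_series (K:=C_AbsRing) (V:=C_NormedModule) u l1 ->
  is_series (K:=C_AbsRing) (V:=C_NormedModule) u l2 -> l1 = l2.
Proof.
  intros H1 H2. exact (filterlim_locally_unique _ _ _ H1 H2).
Qed.

Lemma nat_to_ring_C (n : nat) : nat_to_ring (K:=C_Ring) n = RtoC (INR n).
Proof.
  induction n.
  - rewrite nat_to_ring_O. reflexivity.
  - rewrite nat_to_ring_Sn, IHn, S_INR. change (RtoC (INR n) + 1 = RtoC (INR n + 1))%C.
    rewrite RtoC_plus. reflexivity.
Qed.

Lemma is_derive_pow_C (w : C) (n : nat) :
  is_derive (K:=C_AbsRing) (V:=C_NormedModule) (fun y => pow_n (K:=C_Ring) y n) w
     (RtoC (INR n) * Cpow w (pred n))%C.
Proof.
  rewrite <- nat_to_ring_C.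
  assert (Hf := filterdiff_pow_n (K:=C_AbsRing) w n (fun a b => Cmult_comm a b)).
  destruct Hf as [_ Hd]. split. apply is_linear_scal_l.
  intros x Hx eps. exact (Hd x Hx eps).
Qed.

Lemma sum_delta_R (k N : nat) (x : R) : (1 <= k)%nat ->
  sum_n_m (fun j => if Nat.eqb j k then x else 0) 1 N = if Nat.leb k N then x else 0.
Proof.
  intros Hk. induction N.
  - rewrite sum_n_m_zero by lia. destruct k. lia. reflexivity.
  - rewrite sum_n_Sm by lia. rewrite IHN.
    destruct (Nat.leb k N) eqn:E1; destruct (Nat.eqb (S N) k) eqn:E2;
        destruct (Nat.leb k (S N)) eqn:E3;
        apply Nat.leb_le in E1 || apply Nat.leb_gt in E1;
        apply Nat.eqb_eq in E2 || apply Nat.eqb_neq in E2;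
        apply Nat.leb_le in E3 || apply Nat.leb_gt in E3; try lia;
        change plus with Rplus; lra.
Qed.

Lemma bloch_get (f : C -> C) : Rbar_le (bloch_norm f) (Finite 1) ->
  forall z l, in_disc z -> is_derive (K:=C_AbsRing) (V:=C_NormedModule) f z l ->
  Cmod (f 0) + (1 - Cmod z ^ 2) * Cmod l <= 1.
Proof.
  intros H z l Hz Hd. unfold bloch_norm in H.
  set (E := fun r : R => exists (z l : C), in_disc z /\ is_derive (K := C_AbsRing) (V := C_NormedModule) f z l
        /\ r = (1 - Cmod z ^ 2) * Cmod l) in *.
  destruct (Lub_Rbar_correct E) as [Hub _].
  assert (Hr : Rbar_le ((1 - Cmod z ^ 2) * Cmod l) (Lub_Rbar E)).
  { apply Hub. exists z, l. auto. }
  destruct (Lub_Rbar E); simpl in *; try lra; contradiction.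
Qed.

Lemma bloch_put (g : C -> C) : g 0 = RtoC 0 ->
  (forall z l, in_disc z -> is_derive (K:=C_AbsRing) (V:=C_NormedModule) g z l ->
     (1 - Cmod z ^ 2) * Cmod l <= 1) ->
  Rbar_le (bloch_norm g) (Finite 1).
Proof.
  intros H0 H. unfold bloch_norm. rewrite H0, Cmod_0.
  set (E := fun r : R => exists (z l : C), in_disc z /\ is_derive (K := C_AbsRing) (V := C_NormedModule) g z l
        /\ r = (1 - Cmod z ^ 2) * Cmod l).
  destruct (Lub_Rbar_correct E) as [_ Hlub].
  assert (Hle : Rbar_le (Lub_Rbar E) (Finite 1)).
  { apply Hlub. intros r [z [l [Hz [Hd Hr]]]]. subst r. simpl. apply H; auto. }
  destruct (Lub_Rbar E); simpl in *; try lra; auto.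
Qed.

Lemma is_derive_cpow_scal (al : C) (n : nat) (w : C) :
  is_derive (K:=C_AbsRing) (V:=C_NormedModule) (fun y => (al * pow_n (K:=C_Ring) y n)%C) w
     (al * (RtoC (INR n) * Cpow w (pred n)))%C.
Proof.
  assert (H := is_derive_pow_C w n).
  unfold is_derive in *.
  assert (H2 := @filterdiff_scal_r_fct C_AbsRing (AbsRing_NormedModule C_AbsRing) C_NormedModule _ _ al _ _ (fun a b => Cmult_comm a b) H).
  eapply filterdiff_ext_lin. exact H2.
  intros y. change ((al * (y * (RtoC (INR n) * Cpow w (pred n))))%C = (y * (al * (RtoC (INR n) * Cpow w (pred n))))%C).
  ring.
Qed.

Theorem lemma2p1 (n : nat) (Hn : (2 <= n)%nat) (b : nat -> R) (f : C -> C)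
  (Hf : bloch_admissible b f)
  (Hext : forall (a : nat -> R) (g : C -> C), bloch_admissible a g -> taylor_Fn n a <= taylor_Fn n b)
  (k m : nat) (Hk : (1 <= k)%nat) (Hkm : (k < m)%nat) (Hmn : (m <= n)%nat)
  (Hbk : 0 < b k) :
  b m <= (INR m - INR k) / (2 * INR m) * b k.
Proof.
  destruct Hf as [Hb0 [Hbpos [Htay Hbl]]].
  assert (HmR : 0 < INR m) by (apply lt_0_INR; lia).
  assert (HkR : 0 < INR k) by (apply lt_0_INR; lia).
  set (c := INR k / INR m * b k).
  assert (Hc0 : 0 <= c).
  { unfold c. apply Rmult_le_pos; [apply Rlt_le, Rdiv_lt_0_compat|]; lra. }
  set (a := fun j => if Nat.eqb j k then 0 else if Nat.eqb j m then b m + c else b j).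
  set (p := fun w : C => (RtoC (- b k) * pow_n (K:=C_Ring) w k + RtoC c * pow_n (K:=C_Ring) w m)%C).
  set (g := fun w : C => (f w + p w)%C).
  assert (Hf0 : f (RtoC 0) = RtoC 0).
  { assert (H0 := Htay (RtoC 0) ltac:(unfold in_disc; rewrite Cmod_0; lra)).
    apply (series_unique_C _ _ _ H0).
    eapply is_series_ext; [|exact (series_delta (K:=C_AbsRing) (V:=C_NormedModule) 0 (RtoC 0))].
    intros j. destruct j.
    - change (RtoC 0 = (RtoC (b 0%nat) * Cpow (RtoC 0) 0)%C). rewrite Hb0. simpl. ring.
    - change (RtoC 0 = (RtoC (b (S j)) * (RtoC 0 * Cpow (RtoC 0) j))%C). ring. }
  assert (Hg0 : g (RtoC 0) = RtoC 0).
  { unfold g, p. rewrite Hf0. destruct k as [|k']. lia. destruct m as [|m']. lia.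
    change (RtoC 0 + (RtoC (- b (S k')) * (RtoC 0 * Cpow (RtoC 0) k') + RtoC c * (RtoC 0 * Cpow (RtoC 0) m')) = RtoC 0)%C.
    ring. }
  set (p' := fun w : C => (RtoC (- b k) * (RtoC (INR k) * Cpow w (pred k)) + RtoC c * (RtoC (INR m) * Cpow w (pred m)))%C).
  assert (Hp : forall w, is_derive (K:=C_AbsRing) (V:=C_NormedModule) p w (p' w)).
  { intros w. apply (is_derive_plus (K:=C_AbsRing) (V:=C_NormedModule)); apply is_derive_cpow_scal. }
  assert (Hapos : forall j, 0 <= a j).
  { intros j. unfold a. destruct (Nat.eqb j k). lra. destruct (Nat.eqb j m).
    assert (0 <= b m) by (apply Hbpos; lia). lra.
    destruct j. rewrite Hb0; lra. apply Hbpos; lia. }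
  assert (Hta : has_taylor a g).
  { intros w Hw.
    assert (S1 := Htay w Hw).
    assert (S2 := series_delta (K:=C_AbsRing) (V:=C_NormedModule) k (RtoC (- b k) * pow_n (K:=C_Ring) w k)%C).
    assert (S3 := series_delta (K:=C_AbsRing) (V:=C_NormedModule) m (RtoC c * pow_n (K:=C_Ring) w m)%C).
    assert (S4 := is_series_plus _ _ _ _ (is_series_plus _ _ _ _ S1 S2) S3).
    assert (L : g w = plus (plus (f w) (RtoC (- b k) * pow_n (K:=C_Ring) w k)%C) (RtoC c * pow_n (K:=C_Ring) w m)%C).
    { unfold g, p. change ((f w + (RtoC (- b k) * Cpow w k + RtoC c * Cpow w m)) = f w + RtoC (- b k) * Cpow w k + RtoC c * Cpow w m)%C. ring. }
    rewrite L. eapply is_series_ext; [|exact S4].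
    intros j. unfold a. destruct (Nat.eqb j k) eqn:E1; destruct (Nat.eqb j m) eqn:E2.
    - apply Nat.eqb_eq in E1. apply Nat.eqb_eq in E2. lia.
    - apply Nat.eqb_eq in E1. subst j.
      change ((RtoC (b k) * Cpow w k + RtoC (- b k) * Cpow w k) + RtoC 0 = RtoC 0 * Cpow w k)%C.
      rewrite RtoC_opp. ring.
    - apply Nat.eqb_eq in E2. subst j.
      change ((RtoC (b m) * Cpow w m + RtoC 0) + RtoC c * Cpow w m = RtoC (b m + c) * Cpow w m)%C.
      rewrite RtoC_plus. ring.
    - change ((RtoC (b j) * Cpow w j + RtoC 0) + RtoC 0 = RtoC (b j) * Cpow w j)%C. ring. }
  assert (Hadm : bloch_admissible a g).
  { split; [|split; [|split]].
    - unfold a. destruct (Nat.eqb 0 k) eqn:E1. apply Nat.eqb_eq in E1; lia.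
      destruct (Nat.eqb 0 m) eqn:E2. apply Nat.eqb_eq in E2; lia. exact Hb0.
    - intros j _. apply Hapos.
    - exact Hta.
    - apply bloch_put. exact Hg0.
      intros z l Hz Hd.
      assert (Hr0 := Cmod_ge_0 z). set (r := Cmod z) in *.
      assert (Hr1 : r < 1) by exact Hz.
      assert (Hzr : in_disc (RtoC r)) by (unfold in_disc; rewrite Cmod_R, Rabs_pos_eq; lra).
      destruct (ps_deriv a g Hta z Hz) as [Daz [HDaz Hdaz]].
      assert (El : l = Daz) by (rewrite <- (is_C_derive_unique _ _ _ Hd); apply is_C_derive_unique; exact Hdaz).
      subst l.
      destruct (ps_deriv a g Hta (RtoC r) Hzr) as [Dar [HDar Hdar]].
      destruct (ps_deriv b f Htay (RtoC r) Hzr) as [Dbr [HDbr Hdbr]].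
      assert (Hgr := is_derive_plus _ _ _ _ _ Hdbr (Hp (RtoC r))).
      assert (EDa : Dar = (Dbr + p' (RtoC r))%C).
      { rewrite <- (is_C_derive_unique _ _ _ Hdar). apply is_C_derive_unique. exact Hgr. }
      assert (ReDar := Re_series _ _ HDar).
      assert (Hb1 : Cmod Daz <= Re Dar).
      { apply (norm_series_le _ _ _ _ HDaz ReDar). intros j.
        rewrite Cmod_mult, Cmod_R, Cmod_pow. fold r.
        rewrite <- RtoC_pow, <- RtoC_mult. simpl.
        rewrite Rabs_pos_eq. lra. apply Rmult_le_pos. apply pos_INR. apply Hapos. }
      assert (ERe : Re Dar = Re Dbr + (- b k * (INR k * r ^ pred k) + c * (INR m * r ^ pred m))).
      { rewrite EDa. unfold p'. rewrite <- !RtoC_pow, <- !RtoC_mult, <- RtoC_plus. reflexivity. }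
      assert (Hpow : r ^ pred m <= r ^ pred k).
      { replace (pred m) with (pred k + (pred m - pred k))%nat by lia. rewrite pow_add.
        assert (0 <= r ^ pred k) by (apply pow_le; lra).
        assert (r ^ (pred m - pred k) <= 1).
        { rewrite <- (pow1 (pred m - pred k)). apply pow_incr. lra. }
        assert (0 <= r ^ (pred m - pred k)) by (apply pow_le; lra). nra. }
      assert (Hpneg : - b k * (INR k * r ^ pred k) + c * (INR m * r ^ pred m) <= 0).
      { replace (- b k * (INR k * r ^ pred k) + c * (INR m * r ^ pred m))
          with (INR k * b k * (r ^ pred m - r ^ pred k)) by (unfold c; field; lra).
        assert (0 < INR k * b k) by nra. nra. }
      assert (HReC : Re Dbr <= Cmod Dbr).
      { eapply Rle_trans. apply Rle_abs. apply re_le_Cmod. }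
      assert (Hbf := bloch_get f Hbl (RtoC r) Dbr Hzr Hdbr).
      rewrite Hf0, Cmod_0, Cmod_R, Rabs_pos_eq in Hbf by lra.
      assert (H1r : 0 < 1 - r ^ 2) by nra.
      assert (Cmod Daz <= Cmod Dbr) by lra.
      assert ((1 - r ^ 2) * Cmod Daz <= (1 - r ^ 2) * Cmod Dbr) by (apply Rmult_le_compat_l; lra).
      lra. }
  assert (HF := Hext a g Hadm).
  unfold taylor_Fn in HF.
  set (X := INR k * (Rabs 0 ^ 2 - Rabs (b k) ^ 2)).
  set (Y := INR m * (Rabs (b m + c) ^ 2 - Rabs (b m) ^ 2)).
  assert (Esum : sum_n_m (fun j => INR j * Rabs (a j) ^ 2) 1 n =
                 sum_n_m (fun j => INR j * Rabs (b j) ^ 2) 1 n + X + Y).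
  { rewrite (sum_n_m_ext _ (fun j => plus (plus (INR j * Rabs (b j) ^ 2) (if Nat.eqb j k then X else 0)) (if Nat.eqb j m then Y else 0))).
    - rewrite !sum_n_m_plus, !sum_delta_R by lia.
      replace (Nat.leb k n) with true by (symmetry; apply Nat.leb_le; lia).
      replace (Nat.leb m n) with true by (symmetry; apply Nat.leb_le; lia).
      reflexivity.
    - intros j. unfold a. change plus with Rplus.
      match goal with |- ?x = ?y => change (@eq R x y) end.
      destruct (Nat.eqb j k) eqn:E1; destruct (Nat.eqb j m) eqn:E2.
      + apply Nat.eqb_eq in E1. apply Nat.eqb_eq in E2. lia.
      + apply Nat.eqb_eq in E1. subst j. unfold X. ring.
      + apply Nat.eqb_eq in E2. subst j. unfold Y. ring.
      + ring. }
  rewrite Esum in HF.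
  assert (HXY : X + Y <= 0) by lra.
  unfold X, Y in HXY. rewrite Rabs_R0, !pow2_abs in HXY.
  replace (INR k * (0 ^ 2 - b k ^ 2) + INR m * ((b m + c) ^ 2 - b m ^ 2))
    with (INR k * b k * (2 * b m - b k + c)) in HXY by (unfold c; field; lra).
  assert (H2 : 2 * b m - b k + c <= 0).
  { destruct (Rle_dec (2 * b m - b k + c) 0). exact r.
    assert (0 < INR k * b k) by nra. nra. }
  replace ((INR m - INR k) / (2 * INR m) * b k) with ((b k - c) / 2) by (unfold c; field; lra).
  lra.
Qed.
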